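(* (Completeness.) For every formula $\phi$ of the language $\Phi$: if $h\Vdash\phi$ for every history $h$ of every regular epistemic transition system, then $\vdash\phi$.
   Context: Fix a set of agents $\mathcal{A}$. A coalition is a subset of $\mathcal{A}$. The language $\Phi$ is given by $\phi ::= p \mid \neg\phi \mid \phi\to\phi \mid \mathsf{K}_C\phi \mid \mathsf{H}_C\phi$, where $p$ ranges over propositional variables and $C\subseteq\mathcal{A}$; $\bot,\top$ are defined as usual. Axioms: all propositional tautologies of $\Phi$ and (1) Truth: $\mathsf{K}_C\phi\to\phi$; (2) Negative Introspection: $\neg\mathsf{K}_C\phi\to\mathsf{K}_C\neg\mathsf{K}_C\phi$; (3) Distributivity: $\mathsf{K}_C(\phi\to\psi)\to(\mathsf{K}_C\phi\to\mathsf{K}_C\psi)$; (4) Monotonicity: $\mathsf{K}_C\phi\to\mathsf{K}_D\phi$ if $C\subseteq D$; (5) Strategic Positive Introspection: $\mathsf{H}_C\phi\to\mathsf{K}_C\mathsf{H}_C\phi$; (6) Cooperation: $\mathsf{H}_C(\phi\to\psi)\to(\mathsf{H}_D\phi\to\mathsf{H}_{C\cup D}\psi)$ where $C\cap D=\varnothing$; (7) Empty Coalition: $\mathsf{K}_\varnothing\phi\to\mathsf{H}_\varnothing\phi$; (8) Perfect Recall: $\mathsf{H}_D\phi\to\mathsf{H}_D\mathsf{K}_C\phi$ where $D\subseteq C\neq\varnothing$; (9) Unachievability of Falsehood: $\neg\mathsf{H}_C\bot$. $\vdash\phi$ means $\phi$ is derivable from the axioms using Necessitation ($\phi/\mathsf{K}_C\phi$),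 Strategic Necessitation ($\phi/\mathsf{H}_C\phi$) and Modus Ponens. An epistemic transition system is a tuple $(W,\{\sim_a\}_{a\in\mathcal{A}},V,M,\pi)$ with $W$ a set of states, each $\sim_a$ an equivalence relation on $W$, $V$ a nonempty set (domain of choices), $M\subseteq W\times V^{\mathcal{A}}\times W$, and $\pi$ mapping propositional variables to subsets of $W$. It is regular if for every $w\in W$ and $\mathbf{s}\in V^{\mathcal{A}}$ there is $w'$ with $(w,\mathbf{s},w')\in M$. A strategy profile of coalition $C$ is an element of $V^C$; for profiles $\mathbf{s}_1\in V^{C_1},\mathbf{s}_2\in V^{C_2}$ and $C\subseteq C_1\cap C_2$, $\mathbf{s}_1=_C\mathbf{s}_2$ means $(\mathbf{s}_1)_a=(\mathbf{s}_2)_a$ for all $a\in C$. A history is a sequence $(w_0,\mathbf{s}_1,w_1,\dots,\mathbf{s}_n,w_n)$, $n\ge0$, with $w_i\in W$, $\mathbf{s}_i\in V^{\mathcal{A}}$, $(w_i,\mathbf{s}_{i+1},w_{i+1})\in M$ for $i<n$; $hd(h)$ is its last element and $h::\mathbf{s}::w$ denotes extension by $\mathbf{s},w$. For histories $h=(w_0,\mathbf{s}_1,\dots,w_n)$, $h'=(w'_0,\mathbf{s}'_1,\dots,w'_m)$ and agent $a$, $h\approx_a h'$ iff $n=m$, $w_i\sim_a w'_i$ for all $i$, and $(\mathbf{s}_i)_a=(\mathbf{s}'_i)_a$ for all $i$; $h\approx_C h'$ iff $h\approx_a h'$ for all $a\in C$ (so $\approx_\varnothing$ relates any two histories). Satisfaction: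 $h\Vdash p$ iff $hd(h)\in\pi(p)$; Boolean clauses as usual; $h\Vdash\mathsf{K}_C\phi$ iff $h'\Vdash\phi$ for every history $h'$ with $h\approx_C h'$; $h\Vdash\mathsf{H}_C\phi$ iff there is $\mathbf{s}\in V^C$ such that for every history $h'::\mathbf{s}'::w'$ with $h\approx_C h'$ and $\mathbf{s}=_C\mathbf{s}'$ we have $h'::\mathbf{s}'::w'\Vdash\phi$. *)

(* Defs.v *)
From Stdlib Require Import List Bool.
Set Implicit Arguments.

Section Logic.
Variable Agent : Type.

Definition coalition := Agent -> Prop.
Definition csubset (C D : coalition) : Prop := forall a, C a -> D a.
Definition cunion (C D : coalition) : coalition := fun a => C a \/ D a.
Definition cdisjoint (C D : coalition) : Prop := forall a, ~ (C a /\ D a).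
Definition cempty : coalition := fun _ => False.
Definition cnonempty (C : coalition) : Prop := exists a, C a.

Inductive form : Type :=
| Var : nat -> form
| Neg : form -> form
| Imp : form -> form -> form
| Kn : coalition -> form -> form
| Hw : coalition -> form -> form.

Definition Top : form := Imp (Var 0) (Var 0).
Definition Bot : form := Neg Top.

(* Propositional tautologies: formulas true under every boolean valuation
   of their maximal non-Boolean subformulas (variables, K_C phi, H_C phi). *)
Fixpoint tval (v : form -> bool) (f : form) : bool :=
  match f with
  | Var p => v (Var p)
  | Neg g => negb (tval v g)
  | Imp g h => implb (tval v g) (tval v h)
  | Kn C g => v (Kn C g)
  | Hw C g => v (Hw C g)
  end.
Definition tautology (f : form) : Prop := forall v, tval v f = true.

Inductive derivable : form -> Prop :=
| ax_taut f : tautology f -> derivable f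
| ax_truth C f : derivable (Imp (Kn C f) f)
| ax_neg_intro C f : derivable (Imp (Neg (Kn C f)) (Kn C (Neg (Kn C f))))
| ax_distr C f g : derivable (Imp (Kn C (Imp f g)) (Imp (Kn C f) (Kn C g)))
| ax_mono C D f : csubset C D -> derivable (Imp (Kn C f) (Kn D f))
| ax_spi C f : derivable (Imp (Hw C f) (Kn C (Hw C f)))
| ax_coop C D f g : cdisjoint C D ->
    derivable (Imp (Hw C (Imp f g)) (Imp (Hw D f) (Hw (cunion C D) g)))
| ax_empty f : derivable (Imp (Kn cempty f) (Hw cempty f))
| ax_recall C D f : csubset D C -> cnonempty C ->
    derivable (Imp (Hw D f) (Hw D (Kn C f)))
| ax_unach C : derivable (Neg (Hw C Bot))
| r_nec C f : derivable f -> derivable (Kn C f)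
| r_snec C f : derivable f -> derivable (Hw C f)
| r_mp f g : derivable (Imp f g) -> derivable f -> derivable g.

Record ETS : Type := {
  W : Type;
  sim : Agent -> W -> W -> Prop;
  sim_refl : forall a w, sim a w w;
  sim_sym : forall a w u, sim a w u -> sim a u w;
  sim_trans : forall a w u x, sim a w u -> sim a u x -> sim a w x;
  V : Type;
  V_inhabited : inhabited V;
  M : W -> (Agent -> V) -> W -> Prop;
  pi : nat -> W -> Prop
}.

Definition regular (E : ETS) : Prop :=
  forall (w : W E) (s : Agent -> V E), exists w', M E w s w'.

Inductive hist (E : ETS) : Type :=
| hInit : W E -> hist E
| hExt : hist E -> (Agent -> V E) -> W E -> hist E.

Definition hd (E : ETS) (h : hist E) : W E :=
  match h with hInit _ w => w | hExt _ s w => w end.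

Fixpoint is_hist (E : ETS) (h : hist E) : Prop :=
  match h with
  | hInit _ _ => True
  | hExt h' s w => is_hist h' /\ M E (hd h') s w
  end.

Fixpoint hsim_a (E : ETS) (a : Agent) (h h' : hist E) : Prop :=
  match h, h' with
  | hInit _ w, hInit _ w' => sim E a w w'
  | hExt h1 s w, hExt h1' s' w' => hsim_a a h1 h1' /\ s a = s' a /\ sim E a w w'
  | _, _ => False
  end.

(* h ~_C h' iff h ~_a h' for all a in C; so ~_emptyset relates any two histories. *)
Definition hsim (E : ETS) (C : coalition) (h h' : hist E) : Prop :=
  forall a, C a -> hsim_a a h h'.

Definition agree_on (E : ETS) (C : coalition) (s s' : Agent -> V E) : Prop :=
  forall a, C a -> s a = s' a.

Fixpoint sat (E : ETS) (h : hist E) (f : form) : Prop :=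
  match f with
  | Var p => pi E p (hd h)
  | Neg g => ~ sat h g
  | Imp g k => sat h g -> sat h k
  | Kn C g => forall h', @is_hist E h' -> @hsim E C h h' -> sat h' g
  | Hw C g => exists s : Agent -> V E,
      forall h' s' w', @is_hist E (hExt h' s' w') -> @hsim E C h h' ->
        @agree_on E C s s' -> sat (hExt h' s' w') g
  end.

End Logic.

(* Main.v *)
Require Import Defs.
From Stdlib Require Import List Bool Classical FunctionalExtensionality PropExtensionality ClassicalEpsilon.
From mathcomp Require classical_sets.
Import ListNotations.

Section Compl.
Variable Agent : Type.
Notation form := (form Agent).
Notation coal := (coalition Agent).
Notation BOT := (Bot Agent).

Definition chain (L : list form) (f : form) : form := fold_right (@Imp Agent) f L.

Lemma tval_chain v L f : tval v (chain L f) = true <->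
  ((forall e, In e L -> tval v e = true) -> tval v f = true).
Proof.
  induction L as [|e L IH]; simpl.
  - split. intros H _; exact H. intros H; apply H; intros e [].
  - destruct (tval v e) eqn:He; simpl.
    + rewrite IH. split.
      * intros H1 H2. apply H1. intros; apply H2; auto.
      * intros H1 H2. apply H1. intros x [<-|Hx]; auto.
    + split; auto. intros _ H. assert (X := H e (or_introl eq_refl)). congruence.
Qed.

Lemma tval_bot v : tval v BOT = false.
Proof. simpl. destruct (v (Var Agent 0)); reflexivity. Qed.

Lemma taut_mp1 (A B : form) : (forall v, tval v A = true -> tval v B = true) ->
  derivable A -> derivable B.
Proof.
  intros H HA. apply (r_mp (f:=A)); auto. apply ax_taut. intros v. simpl.
  destruct (tval v A) eqn:E; simpl; auto.
Qed.

Lemma taut_mp2 (A B C : form) :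
  (forall v, tval v A = true -> tval v B = true -> tval v C = true) ->
  derivable A -> derivable B -> derivable C.
Proof.
  intros H HA HB. apply (r_mp (f:=B)); auto. apply (r_mp (f:=A)); auto.
  apply ax_taut. intros v. simpl.
  destruct (tval v A) eqn:E; destruct (tval v B) eqn:E2; simpl; auto.
Qed.

Lemma taut_d (A : form) : (forall v, tval v A = true) -> derivable A.
Proof. intros H. apply ax_taut. exact H. Qed.

Ltac bt := repeat match goal with
  | |- context [tval ?v ?x] => destruct (tval v x); simpl in *
  end; try reflexivity; try discriminate; intuition (try discriminate).

Definition ded (G : form -> Prop) (f : form) : Prop :=
  exists L, (forall e, In e L -> G e) /\ derivable (chain L f).

Lemma ded_ax G f : derivable f -> ded G f.
Proof. intros H; exists []; split; simpl; auto. intros e []. Qed.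

Lemma ded_in G f : G f -> ded G f.
Proof.
  intros H; exists [f]; split. intros e [<-|[]]; auto.
  apply taut_d; intros v; simpl. destruct (tval v f); reflexivity.
Qed.

Lemma ded_mp G a b : ded G (Imp a b) -> ded G a -> ded G b.
Proof.
  intros [L1 [H1 D1]] [L2 [H2 D2]]. exists (L1 ++ L2); split.
  - intros e He; apply in_app_or in He; destruct He; auto.
  - revert D1 D2; apply taut_mp2; intros v T1 T2.
    rewrite tval_chain in *. intros Hall.
    specialize (T1 (fun e h => Hall e (in_or_app _ _ _ (or_introl h)))).
    specialize (T2 (fun e h => Hall e (in_or_app _ _ _ (or_intror h)))).
    simpl in T1. rewrite T2 in T1. exact T1.
Qed.

Lemma ded_mono (G D : form -> Prop) f : (forall x, G x -> D x) -> ded G f -> ded D f.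
Proof. intros S [L [H1 H2]]; exists L; split; auto. Qed.

Lemma ded_imp G a b : ded G (Imp a b) -> derivable (Imp b a) -> False -> True.
Proof. auto. Qed.

Lemma ded_taut1 G A B : (forall v, tval v A = true -> tval v B = true) -> ded G A -> ded G B.
Proof.
  intros H HA. apply (ded_mp _ A); auto. apply ded_ax. apply taut_d.
  intros v; simpl. destruct (tval v A) eqn:E; simpl; auto.
Qed.

Lemma ded_taut2 G A B C :
  (forall v, tval v A = true -> tval v B = true -> tval v C = true) ->
  ded G A -> ded G B -> ded G C.
Proof.
  intros H HA HB. apply (ded_mp _ B); auto. apply (ded_mp _ A); auto.
  apply ded_ax. apply taut_d. intros v; simpl.
  destruct (tval v A) eqn:E; destruct (tval v B) eqn:E2; simpl; auto.
Qed.

Lemma deduction G a b : ded (fun x => G x \/ x = a) b -> ded G (Imp a b).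
Proof.
  intros [L [HL D]]. revert b D. induction L as [|e L IH]; intros b D.
  - apply ded_ax. revert D; apply taut_mp1; intros v H; simpl in *; rewrite H; bt.
  - simpl in D.
    assert (D' : derivable (chain L (Imp e b))).
    { revert D; apply taut_mp1; intros v H. rewrite tval_chain. simpl in H.
      intros Hall. simpl. destruct (tval v e) eqn:Ee; simpl in *; auto.
      rewrite tval_chain in H. apply H; auto. }
    assert (HL' : forall x, In x L -> G x \/ x = a) by (intros; apply HL; simpl; auto).
    destruct (IH HL' _ D') as [L2 [H2 D2]].
    destruct (HL e (or_introl eq_refl)) as [Ge|Ea].
    + exists (e :: L2); split. intros x [<-|Hx]; auto.
      revert D2; apply taut_mp1; intros v H. rewrite tval_chain in H. rewrite tval_chain.
      intros Hall. assert (He : tval v e = true) by (apply Hall; left; auto).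
      assert (H' := H (fun x hx => Hall x (or_intror hx))). simpl in *. rewrite He in H'.
      destruct (tval v a), (tval v b); simpl in *; auto.
    + subst e. exists L2; split; auto.
      revert D2; apply taut_mp1; intros v H. rewrite tval_chain in *.
      intros Hall. specialize (H Hall). simpl in *.
      destruct (tval v a), (tval v b); simpl in *; auto.
Qed.

Definition consistent (G : form -> Prop) := ~ ded G BOT.
Definition MCS (G : form -> Prop) := consistent G /\ forall f, G f \/ G (Neg f).

Lemma mcs_ded G f : MCS G -> ded G f -> G f.
Proof.
  intros [Hc Hm] Hd. destruct (Hm f) as [H|H]; auto. exfalso; apply Hc.
  apply (ded_taut2 _ f (Neg f)); auto. 2: apply ded_in; auto.
  intros v H1 H2; simpl in H2; rewrite H1 in H2; discriminate.
Qed.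

Lemma mcs_thm G f : MCS G -> derivable f -> G f.
Proof. intros H D; apply mcs_ded; auto; apply ded_ax; auto. Qed.

Lemma mcs_neg G f : MCS G -> (G (Neg f) <-> ~ G f).
Proof.
  intros HM; split.
  - intros H1 H2. apply (proj1 HM). apply (ded_taut2 _ f (Neg f)); try apply ded_in; auto.
    intros v a b; simpl in b; rewrite a in b; discriminate.
  - intros H. destruct (proj2 HM f); tauto.
Qed.

Lemma mcs_imp G a b : MCS G -> (G (Imp a b) <-> (G a -> G b)).
Proof.
  intros HM; split.
  - intros H1 H2. apply mcs_ded; auto. apply (ded_mp _ a); apply ded_in; auto.
  - intros H. destruct (proj2 HM a) as [Ha|Ha].
    + apply mcs_ded; auto. apply (ded_taut1 _ b). intros v h; simpl; rewrite h; bt.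
      apply ded_in; auto.
    + apply mcs_ded; auto. apply (ded_taut1 _ (Neg a)). intros v h; simpl in *; bt.
      apply ded_in; auto.
Qed.

Lemma mcs_mp G a b : MCS G -> derivable (Imp a b) -> G a -> G b.
Proof. intros HM D Ha. apply (proj1 (mcs_imp G a b HM)); auto. apply mcs_thm; auto. Qed.

Lemma lindenbaum G : consistent G -> exists D, MCS D /\ forall x, G x -> D x.
Proof.
  intros HG.
  pose (P := fun (A : form -> Prop) => consistent (fun x => G x \/ A x)).
  destruct (@classical_sets.Zorn_bigcup form P) as [A [PA Amax]].
  - intros F FP Ftot. unfold P, consistent. intros [L [HL D]].
    assert (Hc : forall L, (forall e, In e L -> G e \/ classical_sets.bigcup F (fun X => X) e) ->
       (forall e, In e L -> G e) \/ exists X, F X /\ forall e, In e L -> G e \/ X e).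
    { clear L HL D. induction L as [|e L IH]; intros HL.
      - left; intros e [].
      - destruct IH as [IH|[X [FX HX]]]. intros; apply HL; simpl; auto.
        + destruct (HL e (or_introl eq_refl)) as [Ge|Be].
          * left; intros x [<-|Hx]; auto.
          * destruct Be as [Y FY Ye]. right; exists Y; split; auto.
            intros x [<-|Hx]; auto.
        + destruct (HL e (or_introl eq_refl)) as [Ge|Be].
          * right; exists X; split; auto. intros x [<-|Hx]; auto.
          * destruct Be as [Y FY Ye]. destruct (Ftot X Y FX FY) as [S|S].
            -- right; exists Y; split; auto. intros x [<-|Hx]; auto.
               destruct (HX x Hx); auto.
            -- right; exists X; split; auto. intros x [<-|Hx]; auto. }
    destruct (Hc L HL) as [H1|[X [FX HX]]].
    + apply HG. exists L; auto.
    + apply (FP X FX). exists L; auto.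
  - exists (fun x => G x \/ A x). split; [split|]; auto.
    intros f. destruct (classic (A f)) as [Af|Af]; [left; auto|].
    destruct (classic (A (Neg f))) as [An|An]; [right; auto|].
    exfalso.
    assert (N1 : ~ P (fun x => A x \/ x = f)).
    { apply Amax. split. intros x h; auto. intros S. apply Af. apply (S f); right; auto. }
    assert (N2 : ~ P (fun x => A x \/ x = Neg f)).
    { apply Amax. split. intros x h; auto. intros S. apply An. apply (S (Neg f)); right; auto. }
    unfold P, consistent in N1, N2. apply NNPP in N1. apply NNPP in N2.
    apply PA.
    assert (D1 : ded (fun x => G x \/ A x) (Imp f BOT)).
    { apply deduction. revert N1; apply ded_mono. intros x [h|[h|h]]; tauto. }
    assert (D2 : ded (fun x => G x \/ A x) (Imp (Neg f) BOT)).
    { apply deduction. revert N2; apply ded_mono. intros x [h|[h|h]]; tauto. }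
    revert D1 D2; apply ded_taut2. intros v a b; simpl in *; destruct (tval v f); destruct (v (Var Agent 0)); simpl in *; congruence.
Qed.


Lemma coal_ext (C D : coal) : (forall a, C a <-> D a) -> C = D.
Proof. intros H; apply functional_extensionality; intros a; apply propositional_extensionality; auto. Qed.

Lemma imp_trans (a b c : form) : derivable (Imp a b) -> derivable (Imp b c) -> derivable (Imp a c).
Proof. apply taut_mp2. intros v; simpl. destruct (tval v a), (tval v b), (tval v c); auto. Qed.

Lemma K_rule C (a b : form) : derivable (Imp a b) -> derivable (Imp (Kn C a) (Kn C b)).
Proof. intros H. apply (r_mp (ax_distr C a b)). apply r_nec; auto. Qed.

Lemma K_chain C L (f : form) :
  derivable (Imp (Kn C (chain L f)) (chain (map (Kn C) L) (Kn C f))).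
Proof.
  induction L as [|e L IH]; simpl.
  - apply taut_d; intros v; simpl; destruct (v (Kn C f)); auto.
  - assert (H := ax_distr C e (chain L f)).
    revert H IH. apply taut_mp2. intros v H1 H2. simpl in *.
    destruct (v (Kn C (Imp e (chain L f)))), (v (Kn C e)), (v (Kn C (chain L f))),
      (tval v (chain (map (Kn C) L) (Kn C f))); simpl in *; auto.
Qed.

Lemma mcs_K_closure (X G : form -> Prop) C f : MCS X -> (forall e, G e -> X (Kn C e)) ->
  ded G f -> X (Kn C f).
Proof.
  intros HM HG [L [HL D]]. apply r_nec with (C := C) in D.
  assert (D2 := r_mp (K_chain C L f) D).
  apply mcs_ded; auto. exists (map (Kn C) L); split; auto.
  intros e He. apply in_map_iff in He. destruct He as [x [<- Hx]]. auto.
Qed.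

Lemma K_PI C (f : form) : derivable (Imp (Kn C f) (Kn C (Kn C f))).
Proof.
  (* Kf -> ~K~Kf ;  ~K~Kf -> K~K~Kf ; ~K~Kf -> Kf *)
  assert (T1 := ax_truth C (Neg (Kn C f))).
  assert (N1 := ax_neg_intro C f).
  assert (N2 := ax_neg_intro C (Neg (Kn C f))).
  assert (A : derivable (Imp (Neg (Kn C (Neg (Kn C f)))) (Kn C f))).
  { revert N1; apply taut_mp1; intros v; simpl.
    destruct (v (Kn C f)), (v (Kn C (Neg (Kn C f)))); auto. }
  assert (B := K_rule C _ _ A).
  assert (A2 : derivable (Imp (Kn C f) (Neg (Kn C (Neg (Kn C f)))))).
  { revert T1; apply taut_mp1; intros v; simpl.
    destruct (v (Kn C f)), (v (Kn C (Neg (Kn C f)))); auto. }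
  eapply imp_trans. exact A2. eapply imp_trans. exact N2. exact B.
Qed.

Lemma cunion_empty_l (D : coal) : cunion (@cempty Agent) D = D.
Proof. apply coal_ext; intros a; unfold cunion, cempty; tauto. Qed.

Lemma H_rule D (a b : form) : derivable (Imp a b) -> derivable (Imp (Hw D a) (Hw D b)).
Proof.
  intros H. assert (C1 := @ax_coop Agent (@cempty Agent) D a b).
  rewrite cunion_empty_l in C1.
  assert (Hd : cdisjoint (@cempty Agent) D) by (intros x [[] _]).
  apply (r_mp (C1 Hd)). apply r_snec; auto.
Qed.

Lemma H_coal_mono (F C : coal) (f : form) : (forall a, F a -> C a) ->
  derivable (Imp (Hw F f) (Hw C f)).
Proof.
  intros S. pose (D := fun a => C a /\ ~ F a).
  assert (Hd : cdisjoint F D) by (intros x [h1 [_ h2]]; auto).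
  assert (C1 := @ax_coop Agent F D (Top Agent) f Hd).
  assert (E : cunion F D = C).
  { apply coal_ext; intros a; unfold cunion, D. split.
    - intros [h|[h _]]; auto.
    - intros h; destruct (classic (F a)); auto. }
  rewrite E in C1.
  assert (T : derivable (Hw D (Top Agent))) by (apply r_snec; apply taut_d; intros v; simpl; destruct (v (Var Agent 0)); auto).
  assert (R : derivable (Imp (Hw F f) (Hw F (Imp (Top Agent) f)))).
  { apply H_rule. apply taut_d; intros v; simpl. destruct (tval v f), (v (Var Agent 0)); auto. }
  eapply imp_trans. exact R. revert C1 T; apply taut_mp2; intros v; simpl.
  destruct (v (Hw F (Imp (Top Agent) f))), (v (Hw D (Top Agent))), (v (Hw C f)); auto.
Qed.

Inductive item (D : coal) (chi : form) : form -> Prop :=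
| it0 : item D chi chi
| itK C psi : item D chi psi -> (forall a, D a -> C a) -> (exists a, C a) -> item D chi (Kn C psi).

Lemma item_H D chi psi : item D chi psi -> derivable (Imp (Hw D chi) (Hw D psi)).
Proof.
  induction 1.
  - apply taut_d; intros v; simpl; destruct (v (Hw D chi)); auto.
  - eapply imp_trans. exact IHitem. apply ax_recall; auto.
Qed.

Lemma item_K D chi psi : (exists a, D a) -> item D chi psi -> derivable (Imp (Kn D chi) psi).
Proof.
  intros ne. induction 1.
  - apply ax_truth.
  - eapply imp_trans. apply K_PI. eapply imp_trans. apply ax_mono. exact H0.
    apply K_rule; auto.
Qed.


Definition vote := option (form * coal).
Definition fullvote (s : Agent -> vote) (chi : form) (D : coal) := forall a, D a -> s a = Some (chi, D).
Definition goals (X : form -> Prop) (s : Agent -> vote) : form -> Prop :=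
  fun g => exists D chi, X (Hw D chi) /\ fullvote s chi D /\ item D chi g.
Definition Mrel (X : form -> Prop) (s : Agent -> vote) (Y : form -> Prop) : Prop :=
  forall g, goals X s g -> Y g.

Lemma chain_swap (e f : form) L : derivable (Imp e (chain L f)) -> derivable (chain L (Imp e f)).
Proof.
  apply taut_mp1; intros v H. rewrite tval_chain. intros Hall. simpl in *.
  destruct (tval v e); simpl in *; auto. rewrite tval_chain in H; auto.
Qed.

Lemma chain_swap' (e f : form) L : derivable (chain L (Imp e f)) -> derivable (Imp e (chain L f)).
Proof.
  apply taut_mp1; intros v H. rewrite tval_chain in H. simpl in *.
  destruct (tval v e) eqn:Ee; simpl; auto. rewrite tval_chain. intros Hall.
  specialize (H Hall). simpl in H. auto.
Qed.

Lemma ded_trans (G D : form -> Prop) f : (forall g, G g -> ded D g) -> ded G f -> ded D f.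
Proof.
  intros H [L [HL Dv]]. revert f Dv. induction L as [|e L IH]; intros f Dv.
  - apply ded_ax; auto.
  - simpl in Dv. apply chain_swap in Dv.
    apply (ded_mp _ e). apply IH; auto. intros x h; apply HL; simpl; auto.
    apply H. apply HL; simpl; auto.
Qed.


Lemma in_chain_drop (e f : form) L : In e L -> derivable (Imp e (chain L f)) -> derivable (chain L f).
Proof.
  intros Hin. apply taut_mp1; intros v H. rewrite tval_chain in *. intros Hall.
  simpl in H. rewrite (Hall e Hin) in H. simpl in H. rewrite tval_chain in H. auto.
Qed.

Lemma goals_ach (X : form -> Prop) (s : Agent -> vote) (C : coal) (phi : form) :
  MCS X -> (forall a, ~ C a -> s a = None) -> ded (goals X s) phi -> X (Hw C phi).
Proof.
  intros HM Hs Hd.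
  pose (G := fun g => (exists D chi, (exists a, D a) /\ X (Hw D chi) /\ fullvote s chi D /\ g = Kn D chi)
                      \/ X (Hw (@cempty Agent) g)).
  assert (Hd2 : ded G phi).
  { apply (ded_trans (goals X s)); auto.
    intros g [D [chi [H1 [H2 H3]]]].
    destruct (classic (exists a, D a)) as [ne|e].
    - apply (ded_mp _ (Kn D chi)). apply ded_ax. apply item_K; auto.
      apply ded_in. left. exists D, chi; auto.
    - assert (ED : D = @cempty Agent).
      { apply coal_ext; intros a; unfold cempty; split; auto. intros h; apply e; eauto. contradiction. }
      subst D. apply ded_in. right. eapply mcs_mp; eauto. apply item_H; auto. }
  destruct Hd2 as [L [HL Dv]].
  assert (Main : forall L, (forall e, In e L -> G e) -> forall f, derivable (chain L f) ->
     exists F, (forall a, F a -> exists D chi, In (Kn D chi) L /\ fullvote s chi D /\ D a) /\ X (Hw F f)).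
  { clear L HL Dv. induction L as [|e L IH]; intros HL f Dv.
    - exists (@cempty Agent). split. intros a []. apply mcs_thm; auto. apply r_snec; auto.
    - simpl in Dv. destruct (classic (In e L)) as [Hin|Hnin].
      + destruct (IH (fun x h => HL x (or_intror h)) f (in_chain_drop _ _ _ Hin Dv)) as [F [HF XF]].
        exists F; split; auto. intros a Fa. destruct (HF a Fa) as [D [chi [h1 h2]]].
        exists D, chi; split; simpl; auto.
      + apply chain_swap in Dv.
        destruct (IH (fun x h => HL x (or_intror h)) _ Dv) as [F [HF XF]].
        destruct (HL e (or_introl eq_refl)) as [[D [chi [ne [XD [fv ->]]]]]|Xe].
        * assert (XK : X (Hw D (Kn D chi))).
          { eapply mcs_mp; eauto. apply ax_recall. intros a h; auto. exact ne. }
          assert (dj : cdisjoint F D).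
          { intros a [Fa Da]. destruct (HF a Fa) as [D' [chi' [Hin' [fv' Da']]]].
            apply Hnin. assert (E1 := fv a Da). assert (E2 := fv' a Da').
            rewrite E1 in E2. injection E2; intros -> ->. auto. }
          exists (cunion F D). split.
          -- intros a [Fa|Da].
             ++ destruct (HF a Fa) as [D' [chi' [h1 h2]]]. exists D', chi'; split; simpl; auto.
             ++ exists D, chi; split; simpl; auto.
          -- assert (CO := @ax_coop Agent F D (Kn D chi) f dj).
             assert (X1 : X (Imp (Hw D (Kn D chi)) (Hw (cunion F D) f))) by (eapply mcs_mp; eauto).
             exact (proj1 (mcs_imp X _ _ HM) X1 XK).
        * assert (dj : cdisjoint F (@cempty Agent)) by (intros a [_ []]).
          exists (cunion F (@cempty Agent)). split.
          -- intros a [Fa|[]].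
             destruct (HF a Fa) as [D' [chi' [h1 h2]]]. exists D', chi'; split; simpl; auto.
          -- assert (CO := @ax_coop Agent F (@cempty Agent) e f dj).
             assert (X1 : X (Imp (Hw (@cempty Agent) e) (Hw (cunion F (@cempty Agent)) f))) by (eapply mcs_mp; eauto).
             exact (proj1 (mcs_imp X _ _ HM) X1 Xe). }
  destruct (Main L HL phi Dv) as [F [HF XF]].
  eapply mcs_mp; eauto. apply H_coal_mono.
  intros a Fa. destruct (HF a Fa) as [D [chi [_ [fv Da]]]].
  destruct (classic (C a)) as [Ca|nCa]; auto.
  specialize (fv a Da). rewrite (Hs a nCa) in fv. discriminate.
Qed.

Lemma ext_goals (X : form -> Prop) (s : Agent -> vote) (C : coal) (phi : form) :
  MCS X -> (forall a, ~ C a -> s a = None) -> ~ X (Hw C phi) ->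
  exists Y, MCS Y /\ Mrel X s Y /\ Y (Neg phi).
Proof.
  intros HM Hs Hn.
  destruct (lindenbaum (fun x => goals X s x \/ x = Neg phi)) as [Y [HY HGY]].
  - intros Hd. apply Hn. apply goals_ach with (s := s); auto.
    apply deduction in Hd. revert Hd. apply ded_taut1. intros v; simpl.
    destruct (tval v phi), (v (Var Agent 0)); auto.
  - exists Y; split; auto. split. intros g hg; apply HGY; auto. apply HGY; auto.
Qed.


Lemma edge_transfer (X Y : form -> Prop) (D C : coal) : MCS X -> MCS Y ->
  (forall psi, X (Kn D psi) -> Y psi) -> (forall a, C a -> D a) ->
  forall psi, X (Kn C psi) <-> Y (Kn C psi).
Proof.
  intros HX HY HE S psi. split.
  - intros H. apply HE. eapply mcs_mp; eauto. eapply imp_trans. apply K_PI. apply ax_mono. exact S.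
  - intros H. destruct (proj2 HX (Kn C psi)) as [h|h]; auto. exfalso.
    assert (h2 : X (Kn D (Neg (Kn C psi)))).
    { eapply mcs_mp; eauto. eapply imp_trans. apply ax_neg_intro. apply ax_mono. exact S. }
    apply HE in h2. apply (proj1 (mcs_neg _ _ HY)) in h2. auto.
Qed.

Lemma sigma_goals (X Y : form -> Prop) s : MCS X -> MCS Y -> Mrel X s Y ->
  forall psi, Y (Kn (@cempty Agent) psi) <-> X (Kn (@cempty Agent) psi).
Proof.
  intros HX HY HM psi. split.
  - intros H. destruct (proj2 HX (Kn (@cempty Agent) psi)) as [h|h]; auto. exfalso.
    assert (h2 : X (Hw (@cempty Agent) (Neg (Kn (@cempty Agent) psi)))).
    { eapply mcs_mp; eauto. eapply imp_trans. apply ax_neg_intro. apply ax_empty. }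
    assert (h3 : Y (Neg (Kn (@cempty Agent) psi))).
    { apply HM. exists (@cempty Agent), (Neg (Kn (@cempty Agent) psi)). split; auto.
      split. intros a []. constructor. }
    apply (proj1 (mcs_neg _ _ HY)) in h3. auto.
  - intros H. apply HM. exists (@cempty Agent), (Kn (@cempty Agent) psi). split.
    eapply mcs_mp; eauto. eapply imp_trans. apply K_PI. apply ax_empty.
    split. intros a []. constructor.
Qed.

Definition dec (P : Prop) : bool := if ClassicalEpsilon.excluded_middle_informative P then true else false.
Lemma dec_t (P : Prop) : P -> dec P = true.
Proof. unfold dec; destruct (ClassicalEpsilon.excluded_middle_informative P); tauto. Qed.
Lemma dec_f (P : Prop) : ~ P -> dec P = false.
Proof. unfold dec; destruct (ClassicalEpsilon.excluded_middle_informative P); tauto. Qed.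

Definition path := list (coal * (form -> Prop)).

Fixpoint trunc (a : Agent) (p : path) : path :=
  match p with
  | [] => []
  | (C, Y) :: q => if dec (C a) then trunc a q else p
  end.

Lemma trunc_len a p : length (trunc a p) <= length p.
Proof.
  induction p as [|[C Y] q IH]; simpl; auto.
  destruct (dec (C a)); simpl; auto.
Qed.

Lemma trunc_eq_len a p : length (trunc a p) = length p -> trunc a p = p.
Proof.
  destruct p as [|[C Y] q]; simpl; auto.
  destruct (dec (C a)); auto. intros H. assert (T := trunc_len a q).
  exfalso. rewrite H in T. apply (PeanoNat.Nat.nle_succ_diag_l _ T).
Qed.

Definition lastp (r : form -> Prop) (p : path) : form -> Prop :=
  match p with [] => r | (_, Y) :: _ => Y end.

Section Model.
Variable X0 : form -> Prop.

Definition Sig (X : form -> Prop) := forall psi, X (Kn (@cempty Agent) psi) <-> X0 (Kn (@cempty Agent) psi).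

Fixpoint wfp (r : form -> Prop) (p : path) : Prop :=
  match p with
  | [] => MCS r /\ Sig r
  | (C, Y) :: q => wfp r q /\ MCS Y /\ (forall psi, lastp r q (Kn C psi) -> Y psi)
  end.

Lemma wfp_last r p : wfp r p -> MCS (lastp r p) /\ Sig (lastp r p).
Proof.
  induction p as [|[C Y] q IH]; simpl; auto.
  intros [H1 [H2 H3]]. destruct (IH H1) as [M1 S1]. split; auto.
  intros psi. rewrite <- (S1 psi). symmetry. apply (edge_transfer _ _ C); auto. intros a [].
Qed.

Lemma node_lemma (C : coal) r : (exists a, C a) -> forall N p p', length p + length p' <= N ->
  wfp r p -> wfp r p' -> (forall a, C a -> trunc a p = trunc a p') ->
  forall psi, lastp r p (Kn C psi) <-> lastp r p' (Kn C psi).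
Proof.
  intros [a0 Ca0] N. induction N as [|N IH]; intros p p' Hl W1 W2 Ht psi.
  - destruct p; [|simpl in Hl; inversion Hl]. destruct p'; [|simpl in Hl; inversion Hl]. tauto.
  - destruct (classic (p = p')) as [E|NE]. subst; tauto.
    destruct (Compare_dec.le_lt_dec (length p') (length p)) as [L1|L1].
    + destruct p as [|[D Y] p0].
      { simpl in L1. destruct p'; [tauto|simpl in L1; inversion L1]. }
      assert (SD : forall a, C a -> D a).
      { intros a Ca. destruct (classic (D a)) as [Da|nDa]; auto. exfalso.
        assert (Ht' := Ht a Ca). simpl in Ht'. rewrite (dec_f _ nDa) in Ht'.
        assert (T := trunc_len a p'). rewrite <- Ht' in T.
        assert (E : length (trunc a p') = length p').
        { apply PeanoNat.Nat.le_antisymm. apply trunc_len. rewrite <- Ht'. exact L1. }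
        apply trunc_eq_len in E. apply NE. rewrite Ht'. auto. }
      simpl in W1. destruct W1 as [W1 [MY EY]].
      assert (IH' := IH p0 p').
      rewrite <- IH'; auto.
      * simpl. symmetry. apply (edge_transfer _ _ D); auto. apply wfp_last in W1; tauto.
      * simpl in Hl. apply le_S_n. exact Hl.
      * intros a Ca. rewrite <- (Ht a Ca). simpl. rewrite (dec_t _ (SD a Ca)). auto.
    + destruct p' as [|[D Y] p0].
      { simpl in L1. inversion L1. }
      assert (SD : forall a, C a -> D a).
      { intros a Ca. destruct (classic (D a)) as [Da|nDa]; auto. exfalso.
        assert (Ht' := Ht a Ca). simpl in Ht'. rewrite (dec_f _ nDa) in Ht'.
        assert (T := trunc_len a p). rewrite Ht' in T. simpl in T, L1.
        apply (PeanoNat.Nat.lt_irrefl (length p)). eapply PeanoNat.Nat.lt_le_trans; eauto. }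
      simpl in W2. destruct W2 as [W2 [MY EY]].
      assert (IH' := IH p p0).
      rewrite IH'; auto.
      * simpl. apply (edge_transfer _ _ D); auto. apply wfp_last in W2; tauto.
      * simpl in Hl. rewrite PeanoNat.Nat.add_succ_r in Hl. apply le_S_n. exact Hl.
      * intros a Ca. rewrite (Ht a Ca). simpl. rewrite (dec_t _ (SD a Ca)). auto.
Qed.


Record node := mkN { nroot : form -> Prop; npath : path }.
Definition Wt := {n : node | wfp (nroot n) (npath n)}.
Definition LW (w : Wt) : form -> Prop := lastp (nroot (proj1_sig w)) (npath (proj1_sig w)).

Lemma LW_ok (w : Wt) : MCS (LW w) /\ Sig (LW w).
Proof. destruct w as [[r p] H]; unfold LW; simpl in *. apply wfp_last; auto. Qed.

Definition simN (a : Agent) (w w' : Wt) : Prop :=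
  nroot (proj1_sig w) = nroot (proj1_sig w') /\ trunc a (npath (proj1_sig w)) = trunc a (npath (proj1_sig w')).

Lemma simN_refl a w : simN a w w.
Proof. split; auto. Qed.
Lemma simN_sym a w u : simN a w u -> simN a u w.
Proof. intros [h1 h2]; split; auto. Qed.
Lemma simN_trans a w u x : simN a w u -> simN a u x -> simN a w x.
Proof. intros [h1 h2] [h3 h4]; split; congruence. Qed.

Definition Ecan : ETS Agent :=
  @Build_ETS Agent Wt simN simN_refl simN_sym simN_trans vote (inhabits None)
    (fun w s w' => Mrel (LW w) s (LW w')) (fun p w => LW w (Var Agent p)).

Lemma hsim_a_refl a (h : hist Ecan) : hsim_a a h h.
Proof. induction h; simpl; auto. apply simN_refl. split; auto. split; auto. apply simN_refl. Qed.

Lemma hsim_a_hd a (h h' : hist Ecan) : hsim_a a h h' -> simN a (Defs.hd h) (Defs.hd h').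
Proof. destruct h, h'; simpl; try tauto. Qed.

Lemma K_child (w : Wt) (c : coal) (f : form) : ~ LW w (Kn c f) ->
  exists w' : Wt, (forall a, c a -> simN a w w') /\ ~ LW w' f /\ (forall psi, LW w (Kn c psi) -> LW w' psi).
Proof.
  intros Hn. destruct (LW_ok w) as [HM HS].
  destruct (lindenbaum (fun psi => LW w (Kn c psi) \/ psi = Neg f)) as [Y [HY HGY]].
  - intros Hd. apply Hn. apply deduction in Hd.
    assert (Hd2 : ded (fun psi => LW w (Kn c psi)) f).
    { revert Hd; apply ded_taut1; intros v; simpl. destruct (tval v f), (v (Var Agent 0)); auto. }
    apply (mcs_K_closure _ (fun psi => LW w (Kn c psi))); auto.
  - destruct w as [[r p] Hw]. 
    assert (Hw' : wfp r ((c, Y) :: p)).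
    { simpl. refine (conj Hw (conj HY _)). intros psi h. apply HGY. left. exact h. }
    exists (exist _ (mkN r ((c, Y) :: p)) Hw'). split; [|split].
    + intros a ca. split; simpl; auto. rewrite (dec_t _ ca). auto.
    + unfold LW; simpl. intros Yf. assert (Yn : Y (Neg f)) by (apply HGY; right; auto).
      apply (proj1 (mcs_neg _ _ HY)) in Yn. auto.
    + intros psi h. unfold LW; simpl. apply HGY; left; exact h.
Qed.

Lemma root_node (Y : form -> Prop) : MCS Y -> Sig Y -> exists w : Wt, LW w = Y.
Proof.
  intros HM HS. assert (H : wfp Y []) by (simpl; auto).
  exists (exist _ (mkN Y []) H). reflexivity.
Qed.

Lemma empty_coal (c : coal) : ~ (exists a, c a) -> c = @cempty Agent.
Proof. intros e. apply coal_ext; intros a; unfold cempty; split; auto. intros h; apply e; eauto. contradiction. Qed.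

Lemma transfer_K (c : coal) (h h' : hist Ecan) psi : hsim c h h' ->
  LW (Defs.hd h) (Kn c psi) -> LW (Defs.hd h') (Kn c psi).
Proof.
  intros Hs H. destruct (classic (exists a, c a)) as [ne|e].
  - destruct ne as [a0 ca0].
    assert (S : forall a, c a -> simN a (Defs.hd h) (Defs.hd h')) by (intros a ca; apply hsim_a_hd; apply Hs; auto).
    destruct (Defs.hd h) as [[r p] Wp] eqn:E1. destruct (Defs.hd h') as [[r' p'] Wp'] eqn:E2.
    destruct (S a0 ca0) as [Er _]. simpl in Er. subst r'.
    unfold LW in *; simpl in *.
    apply (proj1 (node_lemma c r (ex_intro _ a0 ca0) (length p + length p') p p' (le_n _) Wp Wp'
        (fun a ca => proj2 (S a ca)) psi)). auto.
  - apply empty_coal in e. subst c.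
    destruct (LW_ok (Defs.hd h)) as [_ S1]. destruct (LW_ok (Defs.hd h')) as [_ S2].
    apply S2. apply S1. auto.
Qed.

Lemma truth (f : form) : forall (h : hist Ecan), is_hist h -> (sat h f <-> LW (Defs.hd h) f).
Proof.
  induction f as [n|f IH|f1 IH1 f2 IH2|c f IH|c f IH]; intros h Hh.
  - simpl. tauto.
  - simpl. rewrite IH; auto. symmetry; apply mcs_neg; apply LW_ok.
  - simpl. rewrite IH1, IH2; auto. symmetry; apply mcs_imp; apply LW_ok.
  - simpl. split.
    + intros Hs. destruct (classic (LW (Defs.hd h) (Kn c f))) as [|Hn]; auto. exfalso.
      destruct (classic ((exists a, c a) /\ exists h0 s w, h = hExt h0 s w)) as [[ne [h0 [s [w ->]]]]|Hc].
      * pose (s' := fun a => if dec (c a) then s a else None).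
        destruct (K_child w c f Hn) as [w' [Sw [Nf Inc]]].
        simpl in Hh. destruct Hh as [Hh0 HM].
        assert (HM' : Mrel (LW (Defs.hd h0)) s' (LW w')).
        { intros g [D [chi [XD [fv it]]]]. apply Inc.
          assert (Dc : forall a, D a -> c a).
          { intros a Da. destruct (classic (c a)) as [ca|nca]; auto. exfalso.
            specialize (fv a Da). unfold s' in fv. rewrite (dec_f _ nca) in fv. discriminate. }
          apply HM. exists D, chi. split; auto. split.
          - intros a Da. rewrite <- (fv a Da). unfold s'. rewrite (dec_t _ (Dc a Da)). auto.
          - apply itK; auto. }
        assert (Hh' : is_hist (hExt h0 s' w')) by (simpl; auto).
        assert (Hsim : hsim c (hExt h0 s w) (hExt h0 s' w')).
        { intros a ca. simpl. split. apply hsim_a_refl. split. unfold s'. rewrite (dec_t _ ca). auto.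
          apply Sw; auto. }
        apply Nf. apply (IH _ Hh'). apply Hs; auto.
      * destruct (K_child (Defs.hd h) c f Hn) as [w' [Sw [Nf Inc]]].
        assert (Hsim : hsim c h (@hInit _ Ecan w')).
        { intros a ca. destruct h as [w|h0 s w].
          - simpl. apply Sw; auto.
          - exfalso. apply Hc. split. exists a; auto. exists h0, s, w; auto. }
        apply Nf. apply (IH (@hInit _ Ecan w') I). apply Hs; simpl; auto.
    + intros HK h' Hh' Hs. apply IH; auto.
      assert (H2 := transfer_K c h h' f Hs HK).
      eapply mcs_mp. apply LW_ok. apply ax_truth. exact H2.
  - simpl. split.
    + intros [s Hs]. destruct (classic (LW (Defs.hd h) (Hw c f))) as [|Hn]; auto. exfalso.
      pose (s' := fun a => if dec (c a) then s a else None).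
      destruct (LW_ok (Defs.hd h)) as [HX SX].
      destruct (ext_goals (LW (Defs.hd h)) s' c f HX) as [Y [HY [HMY Yn]]]; auto.
      { intros a nca. unfold s'. rewrite (dec_f _ nca). auto. }
      assert (SY : Sig Y).
      { intros psi. rewrite (sigma_goals _ _ s' HX HY HMY psi). apply SX. }
      destruct (root_node Y HY SY) as [w' Ew'].
      assert (Hh' : is_hist (hExt h s' w')) by (simpl; split; auto; rewrite Ew'; auto).
      assert (Hf := Hs h s' w' Hh' (fun a _ => hsim_a_refl a h)).
      assert (Hag : agree_on Ecan c s s') by (intros a ca; unfold s'; rewrite (dec_t _ ca); auto).
      specialize (Hf Hag). apply (IH _ Hh') in Hf. simpl in Hf. rewrite Ew' in Hf.
      apply (proj1 (mcs_neg _ _ HY)) in Yn. auto.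
    + intros HH. exists (fun _ => Some (f, c)). intros h' s' w' Hh' Hs Hag.
      apply (IH (hExt h' s' w') Hh'). simpl. simpl in Hh'. destruct Hh' as [Hh0 HM]. apply HM.
      exists c, f. split; [|split; [|constructor]].
      * assert (K1 : LW (Defs.hd h) (Kn c (Hw c f))) by (eapply mcs_mp; [apply LW_ok|apply ax_spi|exact HH]).
        assert (K2 := transfer_K c h h' _ Hs K1).
        eapply mcs_mp. apply LW_ok. apply ax_truth. exact K2.
      * intros a ca. rewrite <- (Hag a ca). auto.
Qed.

End Model.
End Compl.

Theorem theorem2 (Agent : Type) (f : form Agent) :
  (forall (E : ETS Agent), regular E ->
     forall h : hist E, is_hist h -> sat h f) ->
  derivable f.
Proof.
  intros Hv. apply NNPP; intros Hn.
  destruct (lindenbaum _ (fun x => x = Neg f)) as [X0 [HX0 HI]].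
  { intros Hd. apply Hn.
    assert (Hd' : @ded Agent (fun x => False \/ x = Neg f) (Bot Agent))
      by (revert Hd; apply ded_mono; intros x h; right; auto).
    apply deduction in Hd'. destruct Hd' as [L [HL D]]. destruct L as [|e L].
    2: destruct (HL e (or_introl eq_refl)).
    simpl in D. revert D; apply taut_mp1; intros v; simpl.
    destruct (tval v f), (v (Var Agent 0)); auto. }
  assert (Hreg : regular (Ecan _ X0)).
  { intros w s. destruct (LW_ok _ X0 w) as [HX SX].
    assert (Hnot : ~ LW _ X0 w (Hw (fun _ => True) (Bot Agent))).
    { apply (proj1 (mcs_neg _ _ _ HX)). apply mcs_thm; auto. apply ax_unach. }
    destruct (ext_goals _ (LW _ X0 w) s (fun _ => True) (Bot Agent) HX) as [Y [HY [HMY _]]]; auto.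
    { intros a n; exfalso; apply n; exact I. }
    assert (SY : Sig _ X0 Y).
    { intros psi. rewrite (sigma_goals _ _ _ s HX HY HMY psi). apply SX. }
    destruct (root_node _ X0 Y HY SY) as [w' Ew'].
    exists w'. simpl. rewrite Ew'. exact HMY. }
  assert (W0 : wfp _ X0 X0 []).
  { simpl. split. exact HX0. intros psi. tauto. }
  pose (w0 := exist _ (mkN _ X0 []) W0 : Wt _ X0).
  assert (Hs := Hv (Ecan _ X0) Hreg (@hInit _ (Ecan _ X0) w0) I).
  apply (truth _ X0 f (@hInit _ (Ecan _ X0) w0) I) in Hs. simpl in Hs.
  assert (Nf := HI (Neg f) eq_refl). apply (proj1 (mcs_neg _ _ _ HX0)) in Nf. auto.
Qed.
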